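(* Let $T=(V,E)$ be a finite rooted tree, $\Pr$ a probability distribution over a finite set of queries, $R\subseteq V$, and $u\in V\setminus R$. Let $\mathrm{hsd}(u,R)=\{v\in T(u)\cap R:\ \mathrm{path}(v,u)\cap R=\emptyset\}$ and let $\mathrm{lsa}(u,R)\in A(u)\cup\{\epsilon\}$ be the lowest proper ancestor of $u$ in $R$ ($\epsilon$ if none). Then the marginal benefit $\Delta(u\mid R)=B(R\cup\{u\})-B(R)$ satisfies $$\Delta(u\mid R)=\mathbb{E}[I(u,\mathrm{lsa}(u,R))]\Big(C(u)-\sum_{v\in\mathrm{hsd}(u,R)}C(v)\Big).$$
   Context: $T=(V,E)$ is a finite rooted tree; $T(u)$ is the set of nodes of the subtree rooted at $u$ (including $u$); $A(u)$ the set of proper ancestors of $u$; for a node $v\in T(u)$, $v\ne u$, $\mathrm{path}(v,u)$ is the set of nodes strictly between $v$ and $u$. Each non-leaf node is associated with a variable of a finite set $X$; $\mathrm{vars}(u)$ is the set of variables of nodes of $T(u)$; each query $q$ determines $Z_q\subseteq X$. For $S\subseteq V$, $w\in V$: $I_q(w,S)=1$ iff $w\in S$, $\mathrm{vars}(w)\subseteq Z_q$, and no $x\in A(w)\cap S$ has $\mathrm{vars}(x)\subseteq Z_q$; else $0$; $\mathbb{E}[I(w,S)]=\sum_q\Pr(q)I_q(w,S)$. Nodes have partial costs $c(x)$ and total costs $C(w)=\sum_{x\in T(w)}c(x)$. Benefit $B(S)=\sum_{w\in S}\mathbb{E}[I(w,S)]C(w)$. Notation: for $a\in A(u)$, $\mathbb{E}[I(u,a)]:=\mathbb{E}[I(u,\{u,a\})]$,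 and $\mathbb{E}[I(u,\epsilon)]:=\mathbb{E}[I(u,\{u\})]$. *)

(* Defs.v *)
From mathcomp Require Import all_boot all_order all_algebra.
Set Implicit Arguments. Unset Strict Implicit. Unset Printing Implicit Defensive.
Import Order.TTheory GRing.Theory Num.Theory.
Local Open Scope ring_scope.

Section Tree.
Variables (V : finType) (root : V) (parent : V -> V).

(* A finite rooted tree given by its root and parent map: the root is its
   own parent (convention) and every node reaches the root by iterating
   the parent map. *)
Definition is_rooted_tree : Prop :=
  parent root = root /\ forall v : V, exists n : nat, iter n parent v = root.

Definition anc (u : V) : {set V} :=
  [set a | [exists k : 'I_#|V|, iter k.+1 parent u == a] && (a != u)].

Definition subtree (u : V) : {set V} := [set v | (v == u) || (u \in anc v)].

(* path(v,u): nodes strictly between v and u (for v in T(u), v <> u) *)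
Definition tpath (v u : V) : {set V} := anc v :&: [set x | u \in anc x].

Definition nonleaf (x : V) : bool := [exists w, x \in anc w].

Variables (X : finType) (var : V -> X).

Definition vars (u : V) : {set X} := [set var x | x in subtree u & nonleaf x].

Variables (Q : finType) (Z : Q -> {set X}).

Definition Iq (q : Q) (w : V) (S : {set V}) : bool :=
  [&& w \in S, vars w \subset Z q &
      ~~ [exists x in anc w :&: S, vars x \subset Z q]].

Variables (R : numDomainType) (Pr : Q -> R).

Definition EI (w : V) (S : {set V}) : R := \sum_(q : Q) Pr q * (Iq q w S)%:R.

Variable (c : V -> R).

Definition Ctot (w : V) : R := \sum_(x in subtree w) c x.

Definition benefit (S : {set V}) : R := \sum_(w in S) EI w S * Ctot w.

Definition hsd (u : V) (S : {set V}) : {set V} :=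
  [set v in subtree u :&: S | tpath v u :&: S == set0].

(* lsa(u,R): lowest proper ancestor of u in S, None standing for epsilon *)
Definition lsa (u : V) (S : {set V}) : option V :=
  [pick a in anc u :&: S | anc u :&: S \subset a |: anc a].

Definition EI_anc (u : V) (a : option V) : R :=
  match a with
  | Some a => EI u [set u; a]
  | None => EI u [set u]
  end.

End Tree.

(* Main.v *)
Require Import Defs.
From mathcomp Require Import all_boot all_order all_algebra.
From mathcomp Require Import zify.
Import Order.TTheory GRing.Theory Num.Theory.

Lemma depth_ex (V : finType) (root : V) (parent : V -> V) (w : V) :
  is_rooted_tree root parent ->
  exists d, [/\ d < #|V|, iter d parent w = root &
            forall n, d <= n -> iter n parent w = root].
Proof.
move=> [Hr Hreach].
have exP : exists n, iter n parent w == root.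
  by have [n Hn] := Hreach w; exists n; rewrite Hn.
case: (ex_minnP exP) => d /eqP Hd Hmin.
have Hge : forall n, d <= n -> iter n parent w = root.
  move=> n Hn; rewrite -(subnK Hn) iterD Hd; exact: iter_fix.
exists d; split => //.
have Hu : uniq [seq iter i parent w | i <- iota 0 d.+1].
  rewrite map_inj_in_uniq ?iota_uniq //.
  have key : forall i j, i < j <= d -> iter i parent w <> iter j parent w.
    move=> i j /andP [Hij Hjd] E.
    have : iter (d - j + i) parent w == root.
      by rewrite iterD E -iterD subnK // Hd.
    move/Hmin; lia.
  move=> i j; rewrite !mem_iota !add0n => Hi Hj E.
  case: (ltngtP i j) => // H.
  - by exfalso; apply: (key i j) => //; apply/andP; split => //; lia.
  - by exfalso; apply: (key j i) => //; apply/andP; split => //; lia.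
move/card_uniqP: Hu; rewrite size_map size_iota => Hs.
by have := max_card (mem [seq iter i parent w | i <- iota 0 d.+1]); rewrite Hs.
Qed.

Lemma ancP (V : finType) (root : V) (parent : V -> V) (a w : V) :
  is_rooted_tree root parent ->
  (a \in anc parent w) <-> (a != w /\ exists n, iter n.+1 parent w = a).
Proof.
move=> Ht; rewrite /anc inE; split.
  by case/andP => /existsP [k /eqP Hk] ->; split => //; exists k.
move=> [Ha [n Hn]]; rewrite Ha andbT; apply/existsP.
case: (ltnP n #|V|) => Hn'.
  by exists (Ordinal Hn'); rewrite Hn.
have [d [Hd Hdr Hge]] := depth_ex _ _ _ w Ht.
have Har : a = root by rewrite -Hn Hge //; lia.
have Hd0 : 0 < d.
  case: d Hd Hdr Hge => // _ Hw _; move: Ha; by rewrite Har -Hw /= eqxx.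
have Hk : d.-1 < #|V| by lia.
exists (Ordinal Hk) => /=.
rewrite Har -Hdr -iterS prednK //.
Qed.

Lemma iter_root (V : finType) (root : V) (parent : V -> V) n :
  is_rooted_tree root parent -> iter n parent root = root.
Proof. by case=> Hr _; apply: iter_fix. Qed.

Lemma anc_trans (V : finType) (root : V) (parent : V -> V) (a b w : V) :
  is_rooted_tree root parent ->
  a \in anc parent b -> b \in anc parent w -> a \in anc parent w.
Proof.
move=> Ht /(ancP _ _ _ _ _ Ht) [Hab [n Hn]] /(ancP _ _ _ _ _ Ht) [Hbw [m Hm]].
apply: (proj2 (ancP _ _ _ a w Ht)); split; last first.
  by exists (n + m).+1; rewrite -Hn -Hm -iterD addSn addnS.
apply/eqP => Eaw.
have Hper : iter (m.+1 + n.+1) parent b = b by rewrite iterD Hn Eaw Hm.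
have Hmul : forall t, iter ((m.+1 + n.+1) * t) parent b = b.
  elim=> [|t IH]; first by rewrite muln0. by rewrite mulnS iterD IH.
have [d [_ _ Hge]] := depth_ex _ _ _ b Ht.
have Hb : b = root by rewrite -(Hmul d) Hge //; nia.
move: Hbw; by rewrite -Eaw -Hn Hb iter_root // eqxx.
Qed.

Lemma anc_irr (V : finType) (parent : V -> V) (a : V) : a \notin anc parent a.
Proof. by rewrite /anc inE eqxx andbF. Qed.

Lemma anc_total (V : finType) (root : V) (parent : V -> V) (a b w : V) :
  is_rooted_tree root parent ->
  a \in anc parent w -> b \in anc parent w ->
  [\/ a = b, a \in anc parent b | b \in anc parent a].
Proof.
move=> Ht /(ancP _ _ _ _ _ Ht) [_ [n Hn]] /(ancP _ _ _ _ _ Ht) [_ [m Hm]].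
case: (ltngtP n m) => H.
- case: (eqVneq b a) => [->|Hba]; first by constructor 1.
  constructor 3; apply: (proj2 (ancP _ _ _ b a Ht)); split => //; exists (m - n).-1.
  have E : ((m - n).-1.+1 + n.+1 = m.+1)%N by lia.
  by rewrite -Hn -Hm -iterD E.
- case: (eqVneq a b) => [->|Hab]; first by constructor 1.
  constructor 2; apply: (proj2 (ancP _ _ _ a b Ht)); split => //; exists (n - m).-1.
  have E : ((n - m).-1.+1 + m.+1 = n.+1)%N by lia.
  by rewrite -Hn -Hm -iterD E.
- by constructor 1; rewrite -Hn -Hm H.
Qed.

Lemma mem_subtree (V : finType) (parent : V -> V) (x u : V) :
  (x \in subtree parent u) = (x == u) || (u \in anc parent x).
Proof. exact: in_set. Qed.

Lemma mem_vars (V : finType) (parent : V -> V) (X : finType) (var : V -> X) (u : V) y :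
  (y \in vars parent var u) = [exists x, (x \in subtree parent u) && nonleaf parent x && (y == var x)].
Proof.
apply/imsetP/existsP => [[x Hx ->]|[x /andP [Hx /eqP ->]]]; exists x => //.
  by rewrite eqxx andbT; move: Hx; rewrite in_set.
by rewrite in_set.
Qed.

Lemma vars_anc (V : finType) (root : V) (parent : V -> V) (X : finType) (var : V -> X) (u w : V) :
  is_rooted_tree root parent ->
  u \in anc parent w -> vars parent var w \subset vars parent var u.
Proof.
move=> Ht Huw; apply/subsetP => y; rewrite !mem_vars => /existsP [x /andP [/andP [Hx Hn] Hy]].
apply/existsP; exists x; rewrite Hn Hy !andbT.
move: Hx; rewrite !mem_subtree => /orP [/eqP ->|Hx].
  by rewrite Huw orbT.
by rewrite (anc_trans _ _ _ _ _ _ Ht Huw Hx) orbT.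
Qed.

Local Open Scope ring_scope.

Lemma mem_hsd (V : finType) (parent : V -> V) (u w : V) S :
  (w \in hsd parent u S) = (w \in subtree parent u) && (w \in S) && (tpath parent w u :&: S == set0).
Proof. by rewrite /hsd in_set in_setI. Qed.

Lemma mem_tpath (V : finType) (parent : V -> V) (u w x : V) :
  (x \in tpath parent w u) = (x \in anc parent w) && (u \in anc parent x).
Proof. by rewrite /tpath in_setI in_set. Qed.

Lemma key_bool (V : finType) (root : V) (parent : V -> V)
  (X : finType) (var : V -> X) (Q : finType) (Z : Q -> {set X})
  (S : {set V}) (u w : V) (q : Q) :
  is_rooted_tree root parent -> u \notin S -> w \in S ->
  let A := Iq parent var Z q w S in
  let B := Iq parent var Z q w (u |: S) in
  let C := (w \in hsd parent u S) && Iq parent var Z q u (u |: S) in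
  [/\ B -> A, A -> ~~ B -> C & C -> A && ~~ B].
Proof.
move=> Ht Hu Hw A B C; split.
- rewrite /B /A /Iq Hw in_setU1 Hw orbT /= => /andP [-> Hn]; apply: contra Hn.
  case/existsP => x /andP [Hx Hp]; apply/existsP; exists x; rewrite Hp andbT.
  by move: Hx; rewrite !in_setI in_setU1 => /andP [-> ->]; rewrite orbT.
- rewrite /A /B /C /Iq Hw in_setU1 Hw orbT /= => /andP [Hvw nA].
  rewrite Hvw /= negbK => /existsP [x /andP [Hx Hvx]].
  move: Hx; rewrite in_setI in_setU1 => /andP [Hxw /orP [/eqP Exu|HxS]]; last first.
    by move: nA; case/existsP; exists x; rewrite in_setI Hxw HxS.
  subst x.
  have nS : forall y, y \in anc parent w -> y \in S -> ~~ (vars parent var y \subset Z q).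
    by move=> y Hy HyS; apply: contra nA => Hv; apply/existsP; exists y; rewrite in_setI Hy HyS.
  rewrite mem_hsd mem_subtree Hxw orbT Hw /= in_setU1 eqxx /= Hvx /=.
  apply/andP; split.
    apply/eqP/setP => y; rewrite in_set0 in_setI mem_tpath.
    apply/negbTE; apply/negP => /andP [/andP [Hyw Huy] HyS].
    by move: (nS y Hyw HyS); rewrite (subset_trans (vars_anc _ _ _ _ var _ _ Ht Huy) Hvx).
  apply/negP => /existsP [y /andP [Hy Hvy]].
  move: Hy; rewrite in_setI in_setU1 => /andP [Hyu /orP [/eqP Eyu|HyS]].
    by move: Hyu; rewrite Eyu (negbTE (anc_irr _ _ _)).
  by move: (nS y (anc_trans _ _ _ _ _ _ Ht Hyu Hxw) HyS); rewrite Hvy.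
- rewrite /C /A /B /Iq mem_hsd in_setU1 eqxx /= => /andP [/andP [/andP [Hsub _] Hemp] /andP [Hvu nU]].
  have Huw : u \in anc parent w.
    move: Hsub; rewrite mem_subtree => /orP [/eqP Ewu|//].
    by move: Hw Hu; rewrite Ewu => ->.
  have Hvw := subset_trans (vars_anc _ _ _ _ var _ _ Ht Huw) Hvu.
  rewrite Hw Hvw in_setU1 Hw orbT /=; apply/andP; split; last first.
    rewrite negbK; apply/existsP; exists u; by rewrite in_setI in_setU1 eqxx Huw Hvu.
  apply/negP => /existsP [x /andP [Hx Hvx]]; move: Hx; rewrite in_setI => /andP [Hxw HxS].
  case: (anc_total _ _ _ _ _ _ Ht Hxw Huw) => [Exu|Hxu|Hux].
  + by move: Hu; rewrite -Exu HxS.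
  + by move: nU; case/existsP; exists x; rewrite in_setI in_setU1 Hxu HxS orbT Hvx.
  + have : x \in tpath parent w u :&: S by rewrite in_setI mem_tpath Hxw Hux HxS.
    by rewrite (eqP Hemp) in_set0.
Qed.

Lemma lsa_Iq (V : finType) (root : V) (parent : V -> V)
  (X : finType) (var : V -> X) (Q : finType) (Z : Q -> {set X})
  (S : {set V}) (u : V) (q : Q) :
  is_rooted_tree root parent -> u \notin S ->
  Iq parent var Z q u (u |: S) =
  Iq parent var Z q u (match lsa parent u S with Some a => [set u; a] | None => [set u] end).
Proof.
move=> Ht Hu; rewrite /lsa; case: pickP => [a /andP [Ha Hsub] | Hn].
- rewrite /Iq in_setU1 in_set2 !eqxx /=; congr (_ && ~~ _).
  move: Ha; rewrite in_setI => /andP [Hau HaS].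
  apply/existsP/existsP => [[x /andP [Hx Hvx]]|[x /andP [Hx Hvx]]]; exists a.
    rewrite in_setI in_set2 Hau eqxx orbT /=.
    move: Hx; rewrite in_setI in_setU1 => /andP [Hxu /orP [/eqP Exu|HxS]].
      by move: Hxu; rewrite Exu (negbTE (anc_irr _ _ _)).
    have : x \in anc parent u :&: S by rewrite in_setI Hxu HxS.
    move/(subsetP Hsub); rewrite in_setU1 => /orP [/eqP <- //|Hxa].
    exact: subset_trans (vars_anc _ _ _ _ var _ _ Ht Hxa) Hvx.
  rewrite in_setI in_setU1 Hau HaS orbT /=.
  move: Hx; rewrite in_setI in_set2 => /andP [Hxu /orP [/eqP Exu|/eqP <- //]].
  by move: Hxu; rewrite Exu (negbTE (anc_irr _ _ _)).
- have Hemp : forall x, x \in anc parent u -> x \notin S.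
    move=> x0 Hx0u; apply/negP => Hx0S.
    have P0 : x0 \in anc parent u :&: S by rewrite in_setI Hx0u Hx0S.
    case: (arg_maxnP (fun a => #|anc parent a|) P0) => a Ha Hmax.
    have Ha' : a \in anc parent u :&: S := Ha.
    move: (Hn a); rewrite Ha' /= => /negP; apply; apply/subsetP => x Hx.
    move: Ha' Hx; rewrite !in_setI => /andP [Hau HaS] /andP [Hxu HxS].
    rewrite in_setU1; case: (anc_total _ _ _ _ _ _ Ht Hxu Hau) => [->|Hxa|Hax].
    + by rewrite eqxx.
    + by rewrite Hxa orbT.
    + exfalso.
      have Hp : anc parent a \proper anc parent x.
        apply/properP; split; last by exists a => //; exact: anc_irr.
        by apply/subsetP => y Hy; exact: anc_trans _ _ _ _ _ _ Ht Hy Hax.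
      have := proper_card Hp.
      have Hx' : x \in anc parent u :&: S by rewrite in_setI Hxu HxS.
      have := Hmax x Hx'.
      move=> H1 H2; move: (leq_trans H2 H1); by rewrite ltnn.
  rewrite /Iq in_setU1 in_set1 !eqxx /=; congr (_ && ~~ _).
  apply/existsP/existsP => [[x /andP [Hx Hvx]]|[x /andP [Hx Hvx]]]; exfalso.
    move: Hx; rewrite in_setI in_setU1 => /andP [Hxu /orP [/eqP Exu|HxS]].
      by move: Hxu; rewrite Exu (negbTE (anc_irr _ _ _)).
    by move: (Hemp x Hxu); rewrite HxS.
  move: Hx; rewrite in_setI in_set1 => /andP [Hxu /eqP Exu].
  by move: Hxu; rewrite Exu (negbTE (anc_irr _ _ _)).
Qed.

Theorem lemma6 (V : finType) (root : V) (parent : V -> V)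
  (X : finType) (var : V -> X) (Q : finType) (Z : Q -> {set X})
  (R : realFieldType) (Pr : Q -> R) (c : V -> R)
  (S : {set V}) (u : V) :
  is_rooted_tree root parent ->
  (forall q, 0 <= Pr q) -> \sum_(q : Q) Pr q = 1 ->
  u \notin S ->
  benefit parent var Z Pr c (u |: S) - benefit parent var Z Pr c S =
  EI_anc parent var Z Pr u (lsa parent u S) *
    (Ctot parent c u - \sum_(v in hsd parent u S) Ctot parent c v).
Proof.
move=> Ht _ _ Hu.
set S' := u |: S.
have HEu : EI parent var Z Pr u S' = EI_anc parent var Z Pr u (lsa parent u S).
  rewrite /EI_anc; case E: (lsa parent u S) => [a|]; rewrite /EI; apply: eq_bigr => q _;
  by rewrite (@lsa_Iq V root parent X var Q Z S u q Ht Hu) E.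
have Hw : forall w, w \in S -> EI parent var Z Pr w S - EI parent var Z Pr w S' =
    (if w \in hsd parent u S then EI parent var Z Pr u S' else 0).
  move=> w HwS; rewrite /EI -sumrB.
  have K := fun q => @key_bool V root parent X var Q Z S u w q Ht Hu HwS.
  case: ifP => Hh; [apply: eq_bigr => q _| apply: big1 => q _];
  move: (K q); rewrite /= Hh /= -/S';
  case: (Iq parent var Z q w S); case: (Iq parent var Z q w S'); case: (Iq parent var Z q u S');
  case=> h1 h2 h3 //=; rewrite ?mulr1n ?mulr0n ?mulr0 ?mulr1 ?subr0 ?subrr //;
  by [move: (h1 isT) | move: (h2 isT isT) | move: (h3 isT)].
have Hsum : \sum_(w in S) EI parent var Z Pr w S * Ctot parent c w
    - \sum_(w in S) EI parent var Z Pr w S' * Ctot parent c w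
    = EI parent var Z Pr u S' * \sum_(v in hsd parent u S) Ctot parent c v.
  rewrite -sumrB.
  transitivity (\sum_(w in S) (if w \in hsd parent u S then EI parent var Z Pr u S' * Ctot parent c w else 0)).
    apply: eq_bigr => w HwS; rewrite -mulrBl Hw //; by case: ifP => _; rewrite ?mul0r.
  rewrite -big_mkcondr /= mulr_sumr; apply: eq_bigl => w.
  by apply/andb_idl => Hh; move: Hh; rewrite mem_hsd => /andP [/andP [_ ->] _].
rewrite /benefit -/S' big_setU1 //= -HEu mulrBr -Hsum.
by rewrite opprB addrA.
Qed.
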